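(* Let $V'$ be an immediate extension of a valuation ring $V$, $K\subset K'$ their fraction field extension, $v=(v_j)_{j<\lambda}$ a pseudo-convergent sequence in $V$ which is not fundamental and has a pseudo limit $x$ in $V'$, but having no pseudo limit in $K$, and suppose $K'=K(x)$. Assume $x$ is transcendental over $K$ and either $\dim V=1$, or $V$ is Henselian. If $v$ is algebraic then $V'$ is not a filtered union of its localizations of polynomial $V$-subalgebras in one variable.
   Context: $\mathrm{val}$ is the valuation. $v$ is pseudo convergent if $\mathrm{val}(v_i-v_{i''})<\mathrm{val}(v_{i'}-v_{i''})$ for $i<i'<i''<\lambda$; $x$ is a pseudo limit if $\mathrm{val}(x-v_i)=\mathrm{val}(v_i-v_{i'})$ for $i<i'<\lambda$; $v$ is fundamental if for every $\gamma$ in the value group, $\mathrm{val}(v_i-v_{i'})>\gamma$ for large $i<i'$; $v$ is algebraic if some $f\in V[T]$ satisfies $\mathrm{val}(f(v_i))<\mathrm{val}(f(v_{i'}))$ for large enough $i<i'<\lambda$. *)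

(* Defs.v *)
(* Valuation rings are represented as subsets (Prop predicates)
   of an ambient field K'. *)
From mathcomp Require Import all_boot all_order all_algebra.
Set Implicit Arguments. Unset Strict Implicit. Unset Printing Implicit Defensive.
Import GRing.Theory.
Local Open Scope ring_scope.

Section Defs.
Variable F : fieldType.
Implicit Types (R K P Q S A : F -> Prop).

Definition subset_of P Q := forall z, P z -> Q z.
Definition strict_subset P Q := subset_of P Q /\ exists z, Q z /\ ~ P z.

Definition is_subfield K :=
  K 0 /\ K 1 /\ (forall a b, K a -> K b -> K (a - b)) /\
  (forall a b, K a -> K b -> K (a * b)) /\ (forall a, K a -> K a^-1).

Definition is_subring R :=
  R 1 /\ (forall a b, R a -> R b -> R (a - b)) /\
  (forall a b, R a -> R b -> R (a * b)).

Definition is_valring R :=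
  is_subring R /\ forall z, z != 0 -> R z \/ R z^-1.

(* the valuation ring V = V' ∩ K of K *)
Definition Vof K R : F -> Prop := fun z => K z /\ R z.

Definition unit_in R z := z != 0 /\ R z /\ R z^-1.
Definition maxideal R z := R z /\ ~ unit_in R z.

(* valuation comparison induced by the valuation ring R:
   val a <= val b  iff  a divides b in R  (val 0 = +oo) *)
Definition vle R a b := exists c, R c /\ b = a * c.
Definition vlt R a b := vle R a b /\ ~ vle R b a.
Definition veq R a b := vle R a b /\ vle R b a.

(* V' (valuation ring of F) is an immediate extension of V = V' ∩ K
   (K the fraction field of V): same value group and same residue field *)
Definition immediate K R :=
  (forall z, z != 0 -> exists a, K a /\ a != 0 /\ unit_in R (z / a)) /\
  (forall z, R z -> exists a, Vof K R a /\ maxideal R (z - a)).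

Definition limit_ordinal (I : Type) (lt : I -> I -> Prop) :=
  (forall i, ~ lt i i) /\ (forall i j k, lt i j -> lt j k -> lt i k) /\
  (forall i j, lt i j \/ i = j \/ lt j i) /\ well_founded lt /\
  (exists i : I, True) /\ (forall i, exists j, lt i j).

Definition ole (I : Type) (lt : I -> I -> Prop) i j := i = j \/ lt i j.

Definition pseudo_convergent R (I : Type) (lt : I -> I -> Prop) (v : I -> F) :=
  forall i i' i'', lt i i' -> lt i' i'' -> vlt R (v i - v i'') (v i' - v i'').

Definition pseudo_limit R (I : Type) (lt : I -> I -> Prop) (v : I -> F) x :=
  forall i i', lt i i' -> veq R (x - v i) (v i - v i').

(* fundamental: for every gamma = val c in the value group of V (c in K^x),
   val (v_i - v_i') > gamma for large i < i' *)
Definition fundamental K R (I : Type) (lt : I -> I -> Prop) (v : I -> F) :=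
  forall c, K c -> c != 0 -> exists i0, forall i i', ole lt i0 i -> lt i i' ->
    vlt R c (v i - v i').

Definition algebraic_seq V R (I : Type) (lt : I -> I -> Prop) (v : I -> F) :=
  exists f : {poly F}, (forall n, V f`_n) /\
    exists i0, forall i i', ole lt i0 i -> lt i i' -> vlt R f.[v i] f.[v i'].

Definition transcendental_over K x :=
  forall p : {poly F}, (forall n, K p`_n) -> p.[x] = 0 -> p = 0.

Definition generated_by K x :=
  forall z, exists p q : {poly F}, (forall n, K p`_n) /\ (forall n, K q`_n) /\
    q.[x] != 0 /\ z = p.[x] / q.[x].

Definition prime_ideal R P :=
  subset_of P R /\ P 0 /\ (forall a b, P a -> P b -> P (a + b)) /\
  (forall a b, R a -> P b -> P (a * b)) /\ ~ P 1 /\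
  (forall a b, R a -> R b -> P (a * b) -> P a \/ P b).

Definition krull_dim1 R :=
  (exists P Q, prime_ideal R P /\ prime_ideal R Q /\ strict_subset P Q) /\
  ~ (exists P Q S, prime_ideal R P /\ prime_ideal R Q /\ prime_ideal R S /\
       strict_subset P Q /\ strict_subset Q S).

Definition henselian R :=
  forall f : {poly F}, (forall n, R f`_n) -> f \is monic ->
  forall a, R a -> maxideal R f.[a] -> unit_in R (f^`()).[a] ->
  exists b, R b /\ f.[b] = 0 /\ maxideal R (b - a).

Definition Valg V y z := exists p : {poly F}, (forall n, V p`_n) /\ z = p.[y].

Definition loc_poly_subalg V A :=
  exists y, (forall p : {poly F}, (forall n, V p`_n) -> p.[y] = 0 -> p = 0) /\
  exists S, subset_of S (Valg V y) /\ S 1 /\ ~ S 0 /\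
    (forall a b, S a -> S b -> S (a * b)) /\
    (forall z, A z <-> exists f s, Valg V y f /\ S s /\ z = f / s).

Definition filtered_union_loc_poly V R :=
  exists (J : Type) (A : J -> F -> Prop),
    (exists j : J, True) /\ (forall j, loc_poly_subalg V (A j)) /\
    (forall j1 j2, exists k, subset_of (A j1) (A k) /\ subset_of (A j2) (A k)) /\
    (forall z, R z <-> exists j, A j z).

End Defs.

(* Main.v *)
Require Import Defs.
From mathcomp Require Import all_boot all_order all_algebra.
From Stdlib Require Import Classical.
From mathcomp Require Import ring zify.
Set Implicit Arguments. Unset Strict Implicit. Unset Printing Implicit Defensive.
Import GRing.Theory.
Local Open Scope ring_scope.

Lemma sr0 (F : fieldType) (S : F -> Prop) : is_subring S -> S 0.
Proof. by case=> [h1 [hs _]]; rewrite -(subrr 1); apply: hs. Qed.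
Lemma sr1 (F : fieldType) (S : F -> Prop) : is_subring S -> S 1.
Proof. by case. Qed.
Lemma srB (F : fieldType) (S : F -> Prop) : is_subring S -> forall a b, S a -> S b -> S (a - b).
Proof. by case=> [_ [hs _]]. Qed.
Lemma srM (F : fieldType) (S : F -> Prop) : is_subring S -> forall a b, S a -> S b -> S (a * b).
Proof. by case=> [_ [_ hm]]. Qed.
Lemma srN (F : fieldType) (S : F -> Prop) : is_subring S -> forall a, S a -> S (- a).
Proof. by move=> h a ha; rewrite -sub0r; apply: srB => //; apply: sr0. Qed.
Lemma srD (F : fieldType) (S : F -> Prop) : is_subring S -> forall a b, S a -> S b -> S (a + b).
Proof. by move=> h a b ha hb; rewrite -(opprK b); apply: srB => //; apply: srN. Qed.
Lemma srX (F : fieldType) (S : F -> Prop) : is_subring S -> forall a n, S a -> S (a ^+ n).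
Proof. move=> h a n ha; elim: n => [|n IH]; first by rewrite expr0; apply: sr1.
by rewrite exprS; apply: srM. Qed.
Lemma srsum (F : fieldType) (S : F -> Prop) : is_subring S ->
  forall (I : Type) (r : seq I) (P : pred I) (G : I -> F), (forall i, P i -> S (G i)) ->
  S (\sum_(i <- r | P i) G i).
Proof. move=> h I r P G hG; apply: (big_ind S) => //; [exact: sr0| exact: srD]. Qed.

Lemma subfield_ring (F : fieldType) (K : F -> Prop) : is_subfield K -> is_subring K.
Proof. by case=> [h0 [h1 [hs [hm _]]]]. Qed.
Lemma sfV (F : fieldType) (K : F -> Prop) : is_subfield K -> forall a, K a -> K a^-1.
Proof. by case=> [h0 [h1 [hs [hm hv]]]]. Qed.

Definition kp (F : fieldType) (S : F -> Prop) (p : {poly F}) := forall n, S p`_n.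

Lemma kpC (F : fieldType) (S : F -> Prop) : is_subring S -> forall c, S c -> kp S c%:P.
Proof. by move=> h c hc n; rewrite coefC; case: ifP => _ //; apply: sr0. Qed.
Lemma kpX (F : fieldType) (S : F -> Prop) : is_subring S -> kp S 'X.
Proof. by move=> h n; rewrite coefX; case: (n == 1)%N; [apply: sr1|apply: sr0]. Qed.
Lemma kpD (F : fieldType) (S : F -> Prop) : is_subring S -> forall p q, kp S p -> kp S q -> kp S (p + q).
Proof. by move=> h p q hp hq n; rewrite coefD; apply: srD. Qed.
Lemma kpB (F : fieldType) (S : F -> Prop) : is_subring S -> forall p q, kp S p -> kp S q -> kp S (p - q).
Proof. by move=> h p q hp hq n; rewrite coefB; apply: srB. Qed.
Lemma kpZ (F : fieldType) (S : F -> Prop) : is_subring S -> forall c p, S c -> kp S p -> kp S (c *: p).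
Proof. by move=> h c p hc hp n; rewrite coefZ; apply: srM. Qed.
Lemma kpM (F : fieldType) (S : F -> Prop) : is_subring S -> forall p q, kp S p -> kp S q -> kp S (p * q).
Proof. by move=> h p q hp hq n; rewrite coefM; apply: srsum => // i _; apply: srM. Qed.
Lemma kpXn (F : fieldType) (S : F -> Prop) : is_subring S -> forall p n, kp S p -> kp S (p ^+ n).
Proof. move=> h p n hp; elim: n => [|n IH]; first by rewrite expr0; apply: kpC => //; apply: sr1.
by rewrite exprS; apply: kpM. Qed.
Lemma kpsum (F : fieldType) (S : F -> Prop) : is_subring S ->
  forall (I : Type) (r : seq I) (P : pred I) (G : I -> {poly F}), (forall i, P i -> kp S (G i)) ->
  kp S (\sum_(i <- r | P i) G i).
Proof. move=> h I r P G hG; apply: (big_ind (kp S)) => //; [by move=> n; rewrite coef0; apply: sr0 | exact: kpD]. Qed.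
Lemma kp_horner (F : fieldType) (S : F -> Prop) : is_subring S -> forall p t, kp S p -> S t -> S p.[t].
Proof. by move=> h p t hp ht; rewrite horner_coef; apply: srsum => // i _; apply: srM => //; apply: srX. Qed.
Lemma kp_sub (F : fieldType) (S T : F -> Prop) p : (forall z, S z -> T z) -> kp S p -> kp T p.
Proof. by move=> h hp n; apply: h. Qed.

Lemma vr_sr (F : fieldType) (R : F -> Prop) : is_valring R -> is_subring R.
Proof. by case. Qed.

Lemma vle_refl (F : fieldType) (R : F -> Prop) (HR : is_valring R) a : vle R a a.
Proof. by exists 1; split; [apply: (sr1 (vr_sr HR))| rewrite mulr1]. Qed.

Lemma vle_trans (F : fieldType) (R : F -> Prop) (HR : is_valring R) a b c :
  vle R a b -> vle R b c -> vle R a c.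
Proof. case=> [d [hd ->]] [e [he ->]]; exists (d * e); split; first by apply: (srM (vr_sr HR)).
by rewrite mulrA. Qed.

Lemma vle_0r (F : fieldType) (R : F -> Prop) (HR : is_valring R) a : vle R a 0.
Proof. by exists 0; split; [apply: (sr0 (vr_sr HR))| rewrite mulr0]. Qed.

Lemma vle_0l (F : fieldType) (R : F -> Prop) b : vle R 0 b -> b = 0.
Proof. by case=> [c [_ ->]]; rewrite mul0r. Qed.

Lemma vle_total (F : fieldType) (R : F -> Prop) (HR : is_valring R) a b :
  vle R a b \/ vle R b a.
Proof.
have [->|a0] := eqVneq a 0; first by right; apply: vle_0r.
have [->|b0] := eqVneq b 0; first by left; apply: vle_0r.
have ab0 : b / a != 0 by rewrite mulf_neq0 // invr_eq0.
case: (HR.2 _ ab0) => h; [left; exists (b / a) | right; exists (b / a)^-1]; split => //.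
  by rewrite mulrC divfK.
by rewrite invf_div mulrC divfK.
Qed.

Lemma vleD (F : fieldType) (R : F -> Prop) (HR : is_valring R) c a b :
  vle R c a -> vle R c b -> vle R c (a + b).
Proof. case=> [d [hd ->]] [e [he ->]]; exists (d + e); split; first by apply: (srD (vr_sr HR)).
by rewrite mulrDr. Qed.

Lemma vleN (F : fieldType) (R : F -> Prop) (HR : is_valring R) c a :
  vle R c a -> vle R c (- a).
Proof. case=> [d [hd ->]]; exists (- d); split; first by apply: (srN (vr_sr HR)).
by rewrite mulrN. Qed.

Lemma vleNr (F : fieldType) (R : F -> Prop) (HR : is_valring R) c a :
  vle R c (- a) -> vle R c a.
Proof. by move=> h; rewrite -(opprK a); apply: (vleN HR). Qed.

Lemma vleNl (F : fieldType) (R : F -> Prop) (HR : is_valring R) c a :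
  vle R c a -> vle R (- c) a.
Proof. case=> [d [hd ->]]; exists (- d); split; first by apply: (srN (vr_sr HR)).
by rewrite mulrNN. Qed.

Lemma vleB (F : fieldType) (R : F -> Prop) (HR : is_valring R) c a b :
  vle R c a -> vle R c b -> vle R c (a - b).
Proof. by move=> ha hb; apply: (vleD HR) => //; apply: (vleN HR). Qed.

Lemma vleM (F : fieldType) (R : F -> Prop) (HR : is_valring R) a b c d :
  vle R a b -> vle R c d -> vle R (a * c) (b * d).
Proof. case=> [e [he ->]] [f [hf ->]]; exists (e * f); split; first by apply: (srM (vr_sr HR)).
by rewrite mulrACA. Qed.

Lemma vle_mulR (F : fieldType) (R : F -> Prop) (HR : is_valring R) a b c :
  vle R a b -> R c -> vle R a (b * c).
Proof. case=> [e [he ->]] hc; exists (e * c); split; first by apply: (srM (vr_sr HR)).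
by rewrite mulrA. Qed.

Lemma vle1 (F : fieldType) (R : F -> Prop) a : vle R 1 a <-> R a.
Proof. split; first by case=> [c [hc ->]]; rewrite mul1r.
by move=> h; exists a; rewrite mul1r. Qed.

Lemma vle_cancel (F : fieldType) (R : F -> Prop) c a b : c != 0 ->
  vle R (c * a) (c * b) -> vle R a b.
Proof. move=> c0 [e [he hb]]; exists e; split => //.
by apply: (mulfI c0); rewrite hb mulrA. Qed.

Lemma vle_div (F : fieldType) (R : F -> Prop) a b : a != 0 -> vle R a b <-> R (b / a).
Proof. move=> a0; split; first by case=> [c [hc ->]]; rewrite mulrAC divff // mul1r.
by move=> h; exists (b / a); split => //; rewrite mulrC divfK. Qed.

Lemma vlt_nle (F : fieldType) (R : F -> Prop) (HR : is_valring R) a b :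
  vlt R a b <-> ~ vle R b a.
Proof. split; first by case.
move=> h; split => //; by case: (vle_total HR a b). Qed.

Lemma vlt_le_trans (F : fieldType) (R : F -> Prop) (HR : is_valring R) a b c :
  vlt R a b -> vle R b c -> vlt R a c.
Proof. move=> [h1 h2] h3; split; first exact: vle_trans h3.
by move=> h4; apply: h2; apply: vle_trans h4. Qed.

Lemma vle_lt_trans (F : fieldType) (R : F -> Prop) (HR : is_valring R) a b c :
  vle R a b -> vlt R b c -> vlt R a c.
Proof. move=> h1 [h2 h3]; split; first exact: vle_trans h2.
by move=> h4; apply: h3; apply: vle_trans h1. Qed.

Lemma vltW (F : fieldType) (R : F -> Prop) a b : vlt R a b -> vle R a b.
Proof. by case. Qed.

Lemma vle_ultra (F : fieldType) (R : F -> Prop) (HR : is_valring R) a b :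
  vlt R a b -> vle R (a + b) a.
Proof.
move=> [hab hba].
case: (vle_total HR (a + b) b) => h.
  suff : vle R (a + b) ((a + b) - b) by rewrite addrK.
  by apply: (vleB HR) => //; apply: (vle_refl HR).
exfalso; apply: hba.
suff : vle R b ((a + b) - b) by rewrite addrK.
by apply: (vleB HR) => //; apply: (vle_refl HR).
Qed.

Lemma veq_ultra (F : fieldType) (R : F -> Prop) (HR : is_valring R) a b :
  vlt R a b -> veq R (a + b) a.
Proof. move=> h; split; first exact: vle_ultra.
by apply: (vleD HR); [apply: (vle_refl HR) | case: h]. Qed.

Lemma veq_sym (F : fieldType) (R : F -> Prop) a b : veq R a b -> veq R b a.
Proof. by case. Qed.

Lemma vleNN (F : fieldType) (R : F -> Prop) (HR : is_valring R) a b :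
  vle R a b -> vle R (- a) (- b).
Proof. by move=> h; apply: (vleNl HR); apply: (vleN HR). Qed.

Lemma vle_oppl (F : fieldType) (R : F -> Prop) (HR : is_valring R) a b :
  vle R (- a) b -> vle R a b.
Proof. by move=> h; rewrite -(opprK a); apply: (vleNl HR). Qed.

Lemma lo_succ (I : Type) (lt : I -> I -> Prop) : limit_ordinal lt -> forall i, exists j, lt i j.
Proof. by case=> [_ [_ [_ [_ [_ h]]]]]. Qed.
Lemma lo_trans (I : Type) (lt : I -> I -> Prop) : limit_ordinal lt ->
  forall i j k, lt i j -> lt j k -> lt i k.
Proof. by case=> [_ [h _]]. Qed.
Lemma lo_tri (I : Type) (lt : I -> I -> Prop) : limit_ordinal lt ->
  forall i j, lt i j \/ i = j \/ lt j i.
Proof. by case=> [_ [_ [h _]]]. Qed.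
Lemma lo_max (I : Type) (lt : I -> I -> Prop) : limit_ordinal lt ->
  forall i j, exists k, ole lt i k /\ ole lt j k.
Proof. move=> HL i j; case: (lo_tri HL i j) => [h|[h|h]].
- by exists j; split; [right|left].
- by exists j; split; left.
- by exists i; split; [left|right]. Qed.
Lemma ole_trans (I : Type) (lt : I -> I -> Prop) : limit_ordinal lt ->
  forall i j k, ole lt i j -> ole lt j k -> ole lt i k.
Proof. move=> HL i j k [->|h1] [<-|h2]; try by [left| right].
by right; apply: (lo_trans HL) h2. Qed.
Lemma ole_lt_trans (I : Type) (lt : I -> I -> Prop) : limit_ordinal lt ->
  forall i j k, ole lt i j -> lt j k -> lt i k.
Proof. move=> HL i j k [->|h1] h2 //; exact: (lo_trans HL h1 h2). Qed.
Lemma lt_ole (I : Type) (lt : I -> I -> Prop) i j : lt i j -> ole lt i j.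
Proof. by right. Qed.

Lemma vlt_oppr (F : fieldType) (R : F -> Prop) (HR : is_valring R) a b :
  vlt R a b -> vlt R a (- b).
Proof. move=> [h1 h2]; split; first exact: (vleN HR).
by move=> h; apply: h2; apply: (vle_oppl HR). Qed.

Lemma veq_trans (F : fieldType) (R : F -> Prop) (HR : is_valring R) a b c :
  veq R a b -> veq R b c -> veq R a c.
Proof. by move=> [h1 h2] [h3 h4]; split; apply: (vle_trans HR) => //; eassumption. Qed.

Lemma vlt_veq_l (F : fieldType) (R : F -> Prop) (HR : is_valring R) a a' b :
  veq R a a' -> vlt R a b -> vlt R a' b.
Proof. by move=> [h1 h2] h; apply: (vle_lt_trans HR) h. Qed.
Lemma vlt_veq_r (F : fieldType) (R : F -> Prop) (HR : is_valring R) a b b' :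
  veq R b b' -> vlt R a b -> vlt R a b'.
Proof. by move=> [h1 h2] h; apply: (vlt_le_trans HR) h1. Qed.

Lemma PL_incr (F : fieldType) (R : F -> Prop) (HR : is_valring R)
  (I : Type) (lt : I -> I -> Prop) (v : I -> F) x :
  limit_ordinal lt -> pseudo_convergent R lt v -> pseudo_limit R lt v x ->
  forall i i', lt i i' -> vlt R (x - v i) (x - v i').
Proof.
move=> HL hpc hx i i' hii'; case: (lo_succ HL i') => i'' hi'.
have h1 := hx i i'' ((lo_trans HL) _ _ _ hii' hi').
have h2 := hx i' i'' hi'.
have h3 := hpc _ _ _ hii' hi'.
apply: (vlt_veq_l HR (veq_sym h1)); apply: (vlt_veq_r HR (veq_sym h2)) => //.
Qed.

Lemma PL_incrW (F : fieldType) (R : F -> Prop) (HR : is_valring R)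
  (I : Type) (lt : I -> I -> Prop) (v : I -> F) x :
  limit_ordinal lt -> pseudo_convergent R lt v -> pseudo_limit R lt v x ->
  forall i i', ole lt i i' -> vle R (x - v i) (x - v i').
Proof. move=> HL hpc hx i i' [->|h]; first exact: (vle_refl HR).
by case: (PL_incr HR HL hpc hx h). Qed.

Lemma limit_crit (F : fieldType) (R : F -> Prop) (HR : is_valring R)
  (I : Type) (lt : I -> I -> Prop) (v : I -> F) x t :
  limit_ordinal lt -> pseudo_convergent R lt v -> pseudo_limit R lt v x ->
  (forall i, vlt R (x - v i) (x - t)) -> pseudo_limit R lt v t.
Proof.
move=> HL hpc hx ht i i' hii'.
apply: (veq_trans HR _ (hx i i' hii')).
have -> : t - v i = (x - v i) + - (x - t) by ring.
apply: (veq_ultra HR); apply: (vlt_oppr HR); apply: ht.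
Qed.

Lemma not_limit (F : fieldType) (R : F -> Prop) (HR : is_valring R)
  (I : Type) (lt : I -> I -> Prop) (v : I -> F) x t :
  limit_ordinal lt -> pseudo_convergent R lt v -> pseudo_limit R lt v x ->
  ~ pseudo_limit R lt v t -> exists i1, forall i, ole lt i1 i -> vlt R (x - t) (x - v i).
Proof.
move=> HL hpc hx hnt.
apply: NNPP => hn; apply: hnt; apply: (limit_crit HR HL hpc hx) => i.
case: (lo_succ HL i) => i' hi.
apply: (vlt_le_trans HR (PL_incr HR HL hpc hx hi)).
case: (classic (vle R (x - v i') (x - t))) => // h; exfalso; apply: hn.
exists i' => j hj; apply: (vlt_le_trans HR ((vlt_nle HR _ _).2 h)).
exact: (PL_incrW HR HL hpc hx hj).
Qed.

Lemma kp_divmod (F : fieldType) (K : F -> Prop) (HK : is_subfield K) p d :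
  kp K p -> kp K d -> d != 0 ->
  exists a r, kp K a /\ kp K r /\ p = a * d + r /\ (size r < size d)%N.
Proof.
have HS := subfield_ring HK.
move=> hp hd d0.
have sd : (0 < size d)%N by rewrite size_poly_gt0.
move: {2}(size p) (leqnn (size p)) => n; elim: n p hp => [|n IH] p hp hn.
  exists 0, p; split; first by move=> j; rewrite coef0; apply: sr0 HS.
  by split => //; rewrite mul0r add0r; split => //; apply: leq_ltn_trans hn sd.
case: (ltnP (size p) (size d)) => hpd.
  exists 0, p; split; first by move=> j; rewrite coef0; apply: sr0 HS.
  by split => //; rewrite mul0r add0r.
set k := (size p - size d)%N.
set c := lead_coef p / lead_coef d.
set p' := p - (c *: 'X^k) * d.
have hc : K c.
  apply: (srM HS); first by rewrite lead_coefE; apply: hp.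
  by apply: (sfV HK); rewrite lead_coefE; apply: hd.
have hq : kp K ((c *: 'X^k) * d).
  by apply: (kpM HS) => //; apply: (kpZ HS) => //; apply: (kpXn HS); apply: (kpX HS).
have hp' : kp K p' by apply: (kpB HS).
have sp' : (size p' <= n)%N.
  have hp0 : (0 < size p)%N by apply: leq_trans hpd.
  suff : (size p' <= (size p).-1)%N.
    move=> h; apply: leq_trans h _; rewrite -ltnS (ltn_predK hp0); exact: hn.
  apply/leq_sizeP => j hj.
  rewrite /p' coefB -scalerAl coefZ coefXnM.
  have hkj : (j < k)%N = false.
    apply/negbTE; rewrite -leqNgt; apply: leq_trans hj; rewrite /k.
    by rewrite -subn1 leq_sub2l.
  rewrite hkj.
  case: (ltngtP j (size p).-1) => hj'.
  - by move: hj; rewrite leqNgt hj'.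
  - have hpj : p`_j = 0 by apply/leq_sizeP: (leqnn j); lia.
    have hdj : d`_(j - k) = 0 by apply/leq_sizeP: (leqnn (j - k)%N); rewrite /k; lia.
    by rewrite hpj hdj mulr0 subr0.
  - have e1 : (j - k)%N = (size d).-1 by rewrite hj' /k; lia.
    rewrite e1 -lead_coefE hj' -lead_coefE /c divfK ?subrr //.
    by rewrite lead_coef_eq0.
have [a' [r' [ha' [hr' [e' sr']]]]] := IH p' hp' sp'.
exists (a' + c *: 'X^k), r'; split.
  by apply: (kpD HS) => //; apply: (kpZ HS) => //; apply: (kpXn HS); apply: (kpX HS).
split => //; split => //.
by rewrite mulrDl -addrA (addrC _ r') addrA -e' /p' subrK.
Qed.

Lemma min_ex (P : nat -> Prop) : (exists n, P n) -> exists n, P n /\ forall m, P m -> (n <= m)%N.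
Proof.
move=> [n hn]; apply: NNPP => hno.
suff : forall k, forall m, (m <= k)%N -> ~ P m by move/(_ n n (leqnn n)).
elim=> [|k IH] m hm hPm; apply: hno; exists m; split => // m' hm'.
  lia.
apply: NNPP => h; apply: (IH m') => //; lia.
Qed.

Lemma kp_coprime_rep (F : fieldType) (K : F -> Prop) (HK : is_subfield K) P Q :
  kp K P -> kp K Q -> Q != 0 ->
  exists D P1 Q1, [/\ kp K D, kp K P1, kp K Q1, D != 0 &
    [/\ P = P1 * D, Q = Q1 * D & coprimep P1 Q1]].
Proof.
have HS := subfield_ring HK.
move=> hP hQ Q0.
pose Ip (D : {poly F}) := D != 0 /\ kp K D /\ exists A B, kp K A /\ kp K B /\ D = A * P + B * Q.
have : exists n, exists D, Ip D /\ size D = n.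
  exists (size Q), Q; split => //; split => //; split => //.
  exists 0, 1; split; first by move=> j; rewrite coef0; apply: sr0 HS.
  split; first by apply: (kpC HS); apply: sr1 HS.
  by rewrite mul0r add0r mul1r.
move/min_ex => [n [[D [[D0 [hD [A [B [hA [hB eD]]]]]] sD]] hmin]].
have divD : forall X A' B', kp K A' -> kp K B' -> X = A' * P + B' * Q ->
    exists a, kp K a /\ X = a * D.
  move=> X A' B' hA' hB' eX.
  have hX : kp K X by rewrite eX; apply: (kpD HS); apply: (kpM HS).
  have [a [r [ha [hr [e sr]]]]] := kp_divmod HK hX hD D0.
  exists a; split => //.
  have [r0'|r0] := eqVneq r 0; first by rewrite e r0' addr0.
  exfalso.
  have hIr : Ip r.
    split => //; split => //.
    exists (A' - a * A), (B' - a * B); split; first by apply: (kpB HS) => //; apply: (kpM HS).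
    split; first by apply: (kpB HS) => //; apply: (kpM HS).
    have -> : r = X - a * D by rewrite e addrC addKr.
    by rewrite eX eD; ring.
  have := hmin (size r) (ex_intro _ r (conj hIr erefl)).
  by rewrite -sD leqNgt sr.
have [a [ha ea]] := divD P 1 0 (kpC HS (sr1 HS)) (kpC HS (sr0 HS)) ltac:(by rewrite mul1r mul0r addr0).
have [b [hb eb]] := divD Q 0 1 (kpC HS (sr0 HS)) (kpC HS (sr1 HS)) ltac:(by rewrite mul1r mul0r add0r).
exists D, a, b; split => //; split => //.
apply/Bezout_coprimepP; exists (A, B) => /=.
have -> : A * a + B * b = 1.
  apply: (mulIf D0); rewrite mul1r {2}eD ea eb; ring.
exact: eqpxx.
Qed.

Definition hom (F : fieldType) (m : nat) (h P Q : {poly F}) : {poly F} :=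
  \sum_(k < m.+1) h`_k *: (P ^+ k * Q ^+ (m - k)).

Lemma hom_eval (F : fieldType) m (h P Q : {poly F}) t :
  Q.[t] != 0 -> (size h <= m.+1)%N ->
  (hom m h P Q).[t] = Q.[t] ^+ m * h.[P.[t] / Q.[t]].
Proof.
move=> Q0 sh; rewrite /hom horner_sum (horner_coef_wide _ sh) mulr_sumr.
apply: eq_bigr => [[k hk]] _ /=.
rewrite hornerZ hornerM !horner_exp expr_div_n.
have e : m = ((m - k) + k)%N by rewrite subnK.
rewrite {2}e exprD.
field.
by rewrite expf_neq0.
Qed.

Lemma kp_hom (F : fieldType) (S : F -> Prop) (HS : is_subring S) m (h P Q : {poly F}) :
  kp S h -> kp S P -> kp S Q -> kp S (hom m h P Q).
Proof.
move=> hh hP hQ; rewrite /hom; apply: (kpsum HS) => k _.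
by apply: (kpZ HS) => //; apply: (kpM HS); apply: (kpXn HS).
Qed.

Lemma dvdp_sumZ (F : fieldType) (D : {poly F}) (I : finType) (c : I -> F) (G : I -> {poly F}) :
  (forall i, D %| G i) -> D %| \sum_(i : I) c i *: G i.
Proof.
move=> hG; apply: (big_ind (fun p => D %| p)); first exact: dvdp0.
  by move=> p q hp hq; apply: dvdp_add.
by move=> i _; rewrite -mul_polyC; apply: dvdp_mull.
Qed.

Lemma hom_modQ (F : fieldType) m (h P Q : {poly F}) :
  Q %| hom m h P Q - h`_m *: P ^+ m.
Proof.
rewrite /hom big_ord_recr /= subnn expr0 mulr1 addrK.
apply: dvdp_sumZ => [[k hk]] /=.
apply: dvdp_mull; apply: dvdp_exp; first by rewrite subn_gt0.
exact: dvdpp.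
Qed.

Lemma hom_modP (F : fieldType) m (h P Q : {poly F}) :
  P %| hom m h P Q - h`_0 *: Q ^+ m.
Proof.
rewrite /hom big_ord_recl /= expr0 mul1r subn0 addrAC subrr add0r.
apply: dvdp_sumZ => k /=.
by apply: dvdp_mulr; apply: dvdp_exp => //; exact: dvdpp.
Qed.

Lemma trans_notK (F : fieldType) (K : F -> Prop) (HK : is_subfield K) x :
  transcendental_over K x -> ~ K x.
Proof.
move=> hx kx.
have HS := subfield_ring HK.
have h := hx ('X - x%:P) (kpB HS (kpX HS) (kpC HS kx)).
have : ('X - x%:P) != 0 :> {poly F} by rewrite -size_poly_gt0 size_XsubC.
by rewrite h ?eqxx // hornerXsubC subrr.
Qed.

Lemma horner_size2 (F : fieldType) (p : {poly F}) t : (size p <= 2)%N ->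
  p.[t] = p`_1 * t + p`_0.
Proof. move=> h; rewrite (horner_coef_wide _ h) !big_ord_recr big_ord0 /= add0r expr0 expr1 mulr1.
by rewrite addrC. Qed.

Lemma Lpoly_ne0 (F : fieldType) (a b : F) : (a != 0) || (b != 0) -> a *: 'X - b%:P != 0.
Proof.
case/orP => h; apply/eqP => e.
- by move: (congr1 (fun p : {poly F} => p`_1) e); rewrite coefB coefZ coefX coefC /= mulr1 subr0 coef0 => /eqP; rewrite (negbTE h).
- by move: (congr1 (fun p : {poly F} => p`_0) e); rewrite coefB coefZ coefX coefC /= mulr0 sub0r coef0 => /eqP; rewrite oppr_eq0 (negbTE h).
Qed.

Lemma Lpoly_size (F : fieldType) (a b : F) : (size (a *: 'X - b%:P)%R <= 2)%N.
Proof.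
apply/leq_sizeP => j hj; rewrite coefB coefZ coefX coefC.
have -> : (j == 1)%N = false by apply/eqP; lia.
have -> : (j == 0)%N = false by apply/eqP; lia.
by rewrite mulr0 subr0.
Qed.

Lemma X_factor (F : fieldType) (K : F -> Prop) (HK : is_subfield K) (p : {poly F}) :
  kp K p -> p`_0 = 0 -> exists a, kp K a /\ p = a * 'X.
Proof.
have HS := subfield_ring HK.
move=> hp p0.
have X0 : 'X != 0 :> {poly F} by rewrite -size_poly_gt0 size_polyX.
have [a [r [ha [hr [e sr]]]]] := kp_divmod HK hp (kpX HS) X0.
exists a; split => //.
rewrite size_polyX in sr.
have er := size1_polyC (sr : (size r <= 1)%N).
have : r`_0 = 0 by move: p0; rewrite e coefD coefMX eqxx add0r.
by move=> r00; rewrite e er r00 addr0.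
Qed.

Lemma mobius (F : fieldType) (K : F -> Prop) (HK : is_subfield K) (x y : F) (P Q g s : {poly F}) :
  transcendental_over K x -> kp K P -> kp K Q -> Q.[x] != 0 -> y = P.[x] / Q.[x] ->
  kp K g -> kp K s -> s.[y] != 0 -> x * s.[y] = g.[y] ->
  exists p1 p0 q1 q0, [/\ K p1, K p0, K q1, K q0 &
     q1 * x + q0 != 0 /\ y = (p1 * x + p0) / (q1 * x + q0)].
Proof.
have HS := subfield_ring HK.
move=> hx hP hQ Qx ey hg hs sy exs.
have y0 : y != 0.
  apply/eqP => y0; rewrite y0 !horner_coef0 in sy exs.
  apply: (trans_notK HK hx).
  have -> : x = g`_0 / s`_0 by rewrite -exs mulfK.
  by apply: (srM HS); [apply: hg | apply: (sfV HK); apply: hs].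
pose R (n : nat) := exists g s, kp K g /\ kp K s /\ s.[y] != 0 /\ x * s.[y] = g.[y] /\
   maxn (size g) (size s) = n.
have [N [[g1 [s1 [hg1 [hs1 [sy1 [exs1 eN]]]]]] hmin]] :=
  min_ex (ex_intro R _ (ex_intro _ g (ex_intro _ s (conj hg (conj hs (conj sy (conj exs erefl))))))).
clear hg hs sy exs g s.
have s10 : s1 != 0 by apply: contraNneq sy1 => ->; rewrite horner0.
have ss1 : (0 < size s1)%N by rewrite size_poly_gt0.
set m := N.-1.
have eNm : N = m.+1 by rewrite /m; lia.
have sg : (size g1 <= m.+1)%N by rewrite -eNm -eN leq_maxl.
have ss : (size s1 <= m.+1)%N by rewrite -eNm -eN leq_maxr.
have top : (s1`_m != 0) || (g1`_m != 0).
  case: (leqP (size g1) (size s1)) => h.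
    have e1 : m = (size s1).-1 by move: eN; rewrite /m (maxn_idPr h) => <-.
    by rewrite e1 -lead_coefE lead_coef_eq0 s10.
  have e1 : m = (size g1).-1 by move: eN; rewrite /m (maxn_idPl (ltnW h)) => <-.
  have g10 : g1 != 0 by rewrite -size_poly_gt0; lia.
  by rewrite e1 -lead_coefE lead_coef_eq0 g10 orbT.
have bot : (s1`_0 != 0) || (g1`_0 != 0).
  apply/negPn/negP; rewrite negb_or !negbK => /andP [/eqP s0 /eqP g0].
  have [a [ha ea]] := X_factor HK hg1 g0.
  have [b [hb eb]] := X_factor HK hs1 s0.
  have b0 : b != 0 by apply: contraNneq s10 => e; rewrite eb e mul0r.
  have by0 : b.[y] != 0 by apply: contraNneq sy1 => e; rewrite eb hornerMX e mul0r.
  have exb : x * b.[y] = a.[y].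
    by apply: (mulIf y0); rewrite -mulrA -!hornerMX -ea -eb.
  have := hmin _ (ex_intro _ a (ex_intro _ b (conj ha (conj hb (conj by0 (conj exb erefl)))))).
  have sb : size s1 = (size b).+1 by rewrite eb size_mulX.
  have sa : size a = 0%N \/ size g1 = (size a).+1.
    have [->|a0] := eqVneq a 0; first by left; rewrite size_poly0.
    by right; rewrite ea size_mulX.
  rewrite -eN; lia.
have Q0 : Q != 0 by apply: contraNneq Qx => ->; rewrite horner0.
have [D [P1 [Q1 [hD hP1 hQ1 D0 [eP eQ cop]]]]] := kp_coprime_rep HK hP hQ Q0.
have Q1x : Q1.[x] != 0 by apply: contraNneq Qx => e; rewrite eQ hornerM e mul0r.
have Dx : D.[x] != 0 by apply: contraNneq Qx => e; rewrite eQ hornerM e mulr0.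
have ey1 : y = P1.[x] / Q1.[x].
  by rewrite ey eP eQ !hornerM invfM mulrACA divff // mulr1.
set hs := hom m s1 P1 Q1; set hg := hom m g1 P1 Q1.
have E0 : 'X * hs - hg = 0.
  apply: hx.
    apply: (kpB HS); last exact: kp_hom.
    by apply: (kpM HS); [apply: (kpX HS) | apply: kp_hom].
  rewrite hornerD hornerN hornerM hornerX /hs /hg !hom_eval // -ey1.
  by rewrite mulrCA exs1 subrr.
have dQ : Q1 %| (s1`_m *: 'X - (g1`_m)%:P).
  have cQ : coprimep Q1 (P1 ^+ m) by apply: coprimep_expr; rewrite coprimep_sym.
  rewrite -(Gauss_dvdpl _ cQ).
  have -> : (s1`_m *: 'X - (g1`_m)%:P) * P1 ^+ m =
     (hg - g1`_m *: P1 ^+ m) - 'X * (hs - s1`_m *: P1 ^+ m) + ('X * hs - hg).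
    by rewrite -!mul_polyC; ring.
  rewrite E0 addr0; apply: dvdp_sub; first exact: hom_modQ.
  by apply: dvdp_mull; apply: hom_modQ.
have dP : P1 %| (s1`_0 *: 'X - (g1`_0)%:P).
  have cP : coprimep P1 (Q1 ^+ m) by apply: coprimep_expr.
  rewrite -(Gauss_dvdpl _ cP).
  have -> : (s1`_0 *: 'X - (g1`_0)%:P) * Q1 ^+ m =
     (hg - g1`_0 *: Q1 ^+ m) - 'X * (hs - s1`_0 *: Q1 ^+ m) + ('X * hs - hg).
    by rewrite -!mul_polyC; ring.
  rewrite E0 addr0; apply: dvdp_sub; first exact: hom_modP.
  by apply: dvdp_mull; apply: hom_modP.
have sQ1 : (size Q1 <= 2)%N := leq_trans (dvdp_leq (Lpoly_ne0 top) dQ) (Lpoly_size _ _).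
have sP1 : (size P1 <= 2)%N := leq_trans (dvdp_leq (Lpoly_ne0 bot) dP) (Lpoly_size _ _).
exists P1`_1, P1`_0, Q1`_1, Q1`_0; split => //.
by rewrite -!horner_size2.
Qed.

Lemma vlt_irr (F : fieldType) (R : F -> Prop) a : ~ vlt R a a.
Proof. by case. Qed.

Lemma vlt1_0 (F : fieldType) (R : F -> Prop) (HR : is_valring R) : vlt R 1 0.
Proof. split; first exact: (vle_0r HR).
by move=> /vle_0l /eqP; rewrite oner_eq0. Qed.

Lemma vlt_mulc (F : fieldType) (R : F -> Prop) (HR : is_valring R) c a b : c != 0 ->
  vlt R a b -> vlt R (c * a) (c * b).
Proof. move=> c0 [h1 h2]; split; first by apply: (vleM HR) => //; apply: (vle_refl HR).
by move=> h; apply: h2; apply: vle_cancel h. Qed.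

Lemma vlt_cancel (F : fieldType) (R : F -> Prop) (HR : is_valring R) c a b : c != 0 ->
  vlt R (c * a) (c * b) -> vlt R a b.
Proof. move=> c0 [h1 h2]; split; first exact: vle_cancel h1.
by move=> h; apply: h2; apply: (vleM HR) => //; apply: (vle_refl HR). Qed.

Lemma vlt1_mul (F : fieldType) (R : F -> Prop) (HR : is_valring R) a b :
  vlt R 1 a -> R b -> vlt R 1 (a * b).
Proof. move=> [h1 h2] hb; split; first by apply: (vle_mulR HR).
move=> [c [hc e]]; apply: h2; exists (b * c); split; first by apply: (srM (vr_sr HR)).
by rewrite mulrA. Qed.

Lemma maxideal_vlt (F : fieldType) (R : F -> Prop) z : maxideal R z -> vlt R 1 z.
Proof.
move=> [hz hnu]; split; first by apply/vle1.
move=> [c [hc e]]; apply: hnu.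
have z0 : z != 0 by apply/eqP => z0; move: e; rewrite z0 mul0r => /eqP; rewrite oner_eq0.
split => //; split => //.
by have -> : z^-1 = c by apply: (mulfI z0); rewrite divff.
Qed.

Lemma unit_veq (F : fieldType) (R : F -> Prop) c z : c != 0 -> unit_in R (z / c) -> veq R c z.
Proof.
move=> c0 [zc [h1 h2]]; split; first by apply/(vle_div _ _ c0).
have z0 : z != 0 by apply: contraNneq zc => ->; rewrite mul0r.
by apply/(vle_div _ _ z0); rewrite invf_div in h2.
Qed.

Lemma veq_minus (F : fieldType) (R : F -> Prop) (HR : is_valring R) a b :
  vlt R a b -> veq R (a - b) a.
Proof. by move=> h; apply: (veq_ultra HR); apply: (vlt_oppr HR). Qed.

Lemma lo_elem (I : Type) (lt : I -> I -> Prop) : limit_ordinal lt -> exists i : I, True.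
Proof. by case=> [_ [_ [_ [_ [h _]]]]]. Qed.

Lemma continuity (F : fieldType) (K R : F -> Prop) (HK : is_subfield K) (HR : is_valring R)
  (I : Type) (lt : I -> I -> Prop) (v : I -> F) (x y p1 p0 q1 q0 : F) :
  limit_ordinal lt -> pseudo_convergent R lt v -> pseudo_limit R lt v x ->
  (forall i, K (v i)) -> ~ (exists t, K t /\ pseudo_limit R lt v t) -> immediate K R ->
  K p1 -> K p0 -> K q1 -> K q0 -> q1 * x + q0 != 0 ->
  y = (p1 * x + p0) / (q1 * x + q0) -> R y ->
  exists i0, forall i, ole lt i0 i ->
    q1 * v i + q0 != 0 /\ vlt R 1 (y - (p1 * v i + p0) / (q1 * v i + q0)).
Proof.
have HS := subfield_ring HK.
move=> HL hpc hx hv hnl [himm1 himm2] kp1 kp0 kq1 kq0 Qx ey hy.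
have nolim : forall t, K t -> ~ pseudo_limit R lt v t by move=> t kt hl; apply: hnl; exists t.
set D := p1 * q0 - p0 * q1.
have eyu : forall t, q1 * t + q0 != 0 ->
    y - (p1 * t + p0) / (q1 * t + q0) = D * (x - t) / ((q1 * x + q0) * (q1 * t + q0)).
  by move=> t Qt; rewrite ey /D; field; rewrite Qt Qx.
have [i1 hi1] : exists i1, forall i, ole lt i1 i ->
    q1 * v i + q0 != 0 /\ R ((q1 * x + q0) / (q1 * v i + q0)).
  have [q10|q10] := eqVneq q1 0.
    have [i1 _] := lo_elem HL; exists i1 => i _; rewrite q10 !mul0r !add0r.
    move: Qx; rewrite q10 mul0r add0r => Qx; split => //; rewrite divff //.
    exact: (sr1 (vr_sr HR)).
  set g := - q0 / q1.
  have kg : K g by apply: (srM HS); [apply: (srN HS) | apply: (sfV HK)].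
  have [i1 hi1] := not_limit HR HL hpc hx (nolim g kg).
  exists i1 => i hi; have h := hi1 i hi.
  have eQ : forall t, q1 * t + q0 = q1 * (t - g) by move=> t; rewrite /g; field.
  have Qv : q1 * v i + q0 != 0.
    apply/eqP => e; move: h; rewrite eQ in e; move/eqP: e; rewrite mulf_eq0 (negbTE q10) /=.
    by rewrite subr_eq0 => /eqP ->; apply: vlt_irr.
  split => //; apply/(vle_div _ _ Qv).
  have -> : q1 * v i + q0 = (q1 * x + q0) - q1 * (x - v i) by ring.
  apply: (proj1 (veq_minus HR _)); rewrite eQ; exact: (vlt_mulc HR q10 h).
have [D00|D0] := eqVneq D 0.
  exists i1 => i hi; have [Qv _] := hi1 i hi; split => //.
  by rewrite eyu // D00 !mul0r; apply: (vlt1_0 HR).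
set th := D / (q1 * x + q0) ^+ 2.
have th0 : th != 0 by rewrite /th mulf_neq0 // invr_eq0 expf_neq0.
have eyu2 : forall t, q1 * t + q0 != 0 ->
    y - (p1 * t + p0) / (q1 * t + q0) = th * (x - t) * ((q1 * x + q0) / (q1 * t + q0)).
  by move=> t Qt; rewrite eyu // /th; field; rewrite Qt Qx.
have kD : K D by apply: (srB HS); apply: (srM HS).
have [t [kt ht]] : exists t, K t /\ vle R 1 (th * (x - t)).
  have [q10|q10] := eqVneq q1 0.
    have q00 : q0 != 0 by move: Qx; rewrite q10 mul0r add0r.
    have p10 : p1 != 0 by apply: contraNneq D0 => e; rewrite /D e q10 !mul0r mulr0 subrr.
    exists (- p0 / p1); split; first by apply: (srM HS); [apply: (srN HS) | apply: (sfV HK)].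
    have -> : th * (x - - p0 / p1) = y by rewrite ey /th /D q10; field; rewrite p10 q00.
    by apply/vle1.
  set al := p1 / q1.
  have kal : K al by apply: (srM HS) => //; apply: (sfV HK).
  have ya : y - al != 0.
    have -> : y - al = - D / (q1 * (q1 * x + q0)) by rewrite ey /al /D; field; rewrite q10 Qx.
    by rewrite mulf_neq0 ?oppr_eq0 // invr_eq0 mulf_neq0.
  have [e [ke [he1 he2]]] : exists e, K e /\ vle R 1 (y - e) /\ vlt R (y - al) (y - e).
    case: (classic (R (y - al))) => hya.
      have [c [kc [c0 hu]]] := himm1 _ ya.
      have [r [[kr Rr] hm]] := himm2 _ hu.2.1.
      exists (al + c * r); split; first by apply: (srD HS) => //; apply: (srM HS).
      have eye : y - (al + c * r) = c * ((y - al) / c - r) by field.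
      have hlt : vlt R c (y - (al + c * r)).
        by rewrite eye -{1}(mulr1 c); apply: (vlt_mulc HR c0); apply: maxideal_vlt.
      have hce := unit_veq c0 hu.
      split; last exact: (vle_lt_trans HR hce.2 hlt).
      have h1 : vle R 1 (y - al) by apply/vle1.
      by apply: (vle_trans HR h1); apply: (vle_trans HR hce.2); case: hlt.
    exists 0; split; first exact: (sr0 HS).
    rewrite subr0; split; first by apply/vle1.
    have h1y : vle R 1 y by apply/vle1.
    apply: (vlt_le_trans HR _ h1y).
    by apply/(vlt_nle HR) => h; apply: hya; apply/vle1.
  have ea : e - al != 0.
    apply/eqP => e0; have eal : e = al by apply/eqP; rewrite -subr_eq0 e0.
    by move: he2; rewrite eal; apply: vlt_irr.
  exists (- q0 / q1 - D / (q1 ^+ 2 * (e - al))); split.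
    apply: (srB HS); first by apply: (srM HS); [apply: (srN HS) | apply: (sfV HK)].
    by apply: (srM HS) => //; apply: (sfV HK); apply: (srM HS); [apply: (srX HS) | apply: (srB HS)].
  have -> : th * (x - (- q0 / q1 - D / (q1 ^+ 2 * (e - al)))) = (y - e) * ((y - al) / (e - al)).
    have eq1 : e * q1 - p1 = (e - al) * q1 by rewrite /al; field.
    rewrite /th ey /al /D; field.
    by rewrite q10 Qx eq1 mulf_neq0.
  apply: (vle_mulR HR he1); apply/(vle_div _ _ ea).
  have -> : e - al = (y - al) - (y - e) by ring.
  by case: (veq_minus HR he2).

have [i2 [hi2 h2]] : exists i2, ole lt i1 i2 /\ vle R 1 (th * (x - v i2)).
  apply: NNPP => hn; apply: (nolim t kt); apply: (limit_crit HR HL hpc hx) => i.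
  have key : forall j, ole lt i1 j -> vlt R (x - v j) (x - t).
    move=> j hj; apply: (vlt_cancel HR th0); apply: (vlt_le_trans HR _ ht).
    by apply/(vlt_nle HR) => hle; apply: hn; exists j.
  case: (lo_tri HL i i1) => [h|[->|h]]; last 2 first.
  - exact: key (or_introl erefl).
  - exact: key (or_intror h).
  by apply: (vlt_le_trans HR (PL_incr HR HL hpc hx h)); case: (key i1 (or_introl erefl)).
have [i3 h3] := lo_succ HL i2.
exists i3 => i hi.
have hi' : lt i2 i by case: hi => [<-|h]; [exact: h3 | exact: (lo_trans HL h3 h)].
have [Qv hR] := hi1 i (ole_trans HL hi2 (or_intror hi')).
split => //; rewrite eyu2 //; apply: (vlt1_mul HR _ hR).
apply: (vle_lt_trans HR h2); apply: (vlt_mulc HR th0); exact: (PL_incr HR HL hpc hx hi').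
Qed.


Lemma poly_diff (F : fieldType) (R : F -> Prop) (HR : is_valring R) (p : {poly F}) a b :
  kp R p -> R a -> R b -> vle R (a - b) (p.[a] - p.[b]).
Proof.
have HS := vr_sr HR.
move=> + ha hb; elim/poly_ind: p => [|p c IH] hp.
  by rewrite !horner0 subrr; apply: (vle_0r HR).
have hp' : kp R p by move=> n; move: (hp n.+1); rewrite coefD coefMX coefC /= addr0.
rewrite !hornerMXaddC.
have -> : p.[a] * a + c - (p.[b] * b + c) = (p.[a] - p.[b]) * a + (a - b) * p.[b] by ring.
apply: (vleD HR); first by apply: (vle_mulR HR) => //; apply: IH.
by apply: (vle_mulR HR); [apply: (vle_refl HR) | apply: (kp_horner HS)].
Qed.

Lemma vle_unit (F : fieldType) (R : F -> Prop) w : vle R w 1 -> w != 0 /\ R w^-1.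
Proof.
move=> [c [hc e]].
have w0 : w != 0 by apply/eqP => w0; move: e; rewrite w0 mul0r => /eqP; rewrite oner_eq0.
split => //; have -> : w^-1 = c by apply: (mulfI w0); rewrite divff.
done.
Qed.

Lemma unit_perturb (F : fieldType) (R : F -> Prop) (HR : is_valring R) (s s' : F) :
  s != 0 -> R s^-1 -> vlt R 1 ((s - s') / s) -> s' != 0 /\ R s'^-1.
Proof.
move=> s0 hs hn.
have [h1 _] := veq_minus HR hn.
have [w0 hw] := vle_unit h1.
have e : s' = s * (1 - (s - s') / s) by field.
have s'0 : s' != 0 by rewrite e mulf_neq0.
split => //; rewrite e invfM; exact: (srM (vr_sr HR)).
Qed.

Lemma lemL (K' : fieldType) (K V' : K' -> Prop)
  (I : Type) (lt : I -> I -> Prop) (v : I -> K') (x : K') :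
  is_subfield K -> is_valring V' -> immediate K V' ->
  limit_ordinal lt ->
  (forall i, Vof K V' (v i)) ->
  pseudo_convergent V' lt v ->
  V' x -> pseudo_limit V' lt v x ->
  ~ (exists y, K y /\ pseudo_limit V' lt v y) ->
  generated_by K x ->
  transcendental_over K x ->
  filtered_union_loc_poly (Vof K V') V' ->
  forall Z1 Z2 : {poly K'}, kp K Z1 -> kp K Z2 -> Z2.[x] != 0 -> V' (Z1.[x] / Z2.[x]) ->
  exists i0, forall i, ole lt i0 i -> vle V' Z2.[v i] Z1.[v i].
Proof.
move=> HK HR himm HL hv hpc hxV hx hnl hgen htr [J [A [_ [hloc [hdir hun]]]]] Z1 Z2 hZ1 hZ2 Z2x hz.
have HS := subfield_ring HK.
have HSR := vr_sr HR.
have hVK : forall w, Vof K V' w -> K w by move=> w [].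
have hVR : forall w, Vof K V' w -> V' w by move=> w [].
set z := Z1.[x] / Z2.[x].
have [j1 hj1] := (hun x).1 hxV.
have [j2 hj2] := (hun z).1 hz.
have [k [sk1 sk2]] := hdir j1 j2.
have hxk := sk1 _ hj1.
have hzk := sk2 _ hj2.
have [y [hyind [S [hSsub [hS1 [hS0 [hSmul hAk]]]]]]] := hloc k.
have AkV : forall w, A k w -> V' w by move=> w hw; apply/(hun w).2; exists k.
have V1 : Vof K V' 1 by split; [apply: (sr1 HS) | apply: (sr1 HSR)].
have V0 : Vof K V' 0 by split; [apply: (sr0 HS) | apply: (sr0 HSR)].
have HV : is_subring (Vof K V').
  split => //; split.
    by move=> a b [ka ra] [kb rb]; split; [apply: (srB HS) | apply: (srB HSR)].
  by move=> a b [ka ra] [kb rb]; split; [apply: (srM HS) | apply: (srM HSR)].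
have kpVK : forall p, kp (Vof K V') p -> kp K p by move=> p hp n; apply: hVK.
have kpVR : forall p, kp (Vof K V') p -> kp V' p by move=> p hp n; apply: hVR.
have Valg1 : Valg (Vof K V') y 1.
  by exists 1; split; [rewrite -polyC1; apply: (kpC HV) | rewrite hornerC].
have hyV : V' y.
  apply: AkV; apply/hAk; exists y, 1; split; last by split => //; rewrite divr1.
  by exists 'X; split; [apply: (kpX HV) | rewrite hornerX].
have Sunit : forall s, S s -> s != 0 /\ V' s^-1.
  move=> s hs; split; first by apply/eqP => e; apply: hS0; rewrite -e.
  apply: AkV; apply/hAk; exists 1, s; split => //; split => //; by rewrite mul1r.
have [f0 [s0 [[g0 [hg0 ef0]] [hs0 ex]]]] := (hAk x).1 hxk.
have [g0' [hg0' es0]] := hSsub _ hs0.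
have [f1 [s1 [[g1 [hg1 ef1]] [hs1 ez]]]] := (hAk z).1 hzk.
have [g1' [hg1' es1]] := hSsub _ hs1.
have [s00 s0V] := Sunit _ hs0.
have [s10 s1V] := Sunit _ hs1.
have [P [Q [hP [hQ [Qx ey]]]]] := hgen y.
have [p1 [p0 [q1 [q0 [kp1 kp0 kq1 kq0 [Qx' ey']]]]]] :
  exists p1 p0 q1 q0, [/\ K p1, K p0, K q1, K q0 &
     q1 * x + q0 != 0 /\ y = (p1 * x + p0) / (q1 * x + q0)].
  apply: (mobius HK htr hP hQ Qx ey (kpVK _ hg0) (kpVK _ hg0')); first by rewrite -es0.
  by rewrite -es0 -ef0 ex divfK.
have [i0 hi0] := continuity HK HR HL hpc hx (fun i => hVK _ (hv i)) hnl himm kp1 kp0 kq1 kq0 Qx' ey' hyV.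
exists i0 => i hi; have [Qv hlt] := hi0 i hi.
set u := (p1 * v i + p0) / (q1 * v i + q0) in hlt *.
have hyu : V' (y - u) by case: hlt => /vle1.
have hu : V' u.
  have -> : u = y - (y - u) by ring.
  by apply: (srB HSR).
have [c [hc ec]] := poly_diff HR (kpVR _ hg1') hyV hu.
rewrite es1 in s10 s1V.
have [su0 suV] : g1'.[u] != 0 /\ V' g1'.[u]^-1.
  apply: (unit_perturb HR s10 s1V).
  rewrite ec -mulrA; apply: (vlt1_mul HR hlt); exact: (srM HSR).
set m := maxn (size g1) (size g1').
set Pl := p1 *: 'X + p0%:P.
set Ql := q1 *: 'X + q0%:P.
have ePl : forall t, Pl.[t] = p1 * t + p0 by move=> t; rewrite /Pl hornerD hornerZ hornerX hornerC.
have eQl : forall t, Ql.[t] = q1 * t + q0 by move=> t; rewrite /Ql hornerD hornerZ hornerX hornerC.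
have kPl : kp K Pl by apply: (kpD HS); [apply: (kpZ HS) => //; apply: (kpX HS) | apply: (kpC HS)].
have kQl : kp K Ql by apply: (kpD HS); [apply: (kpZ HS) => //; apply: (kpX HS) | apply: (kpC HS)].
have sg1 : (size g1 <= m.+1)%N by rewrite /m; apply: leq_trans (leq_maxl _ _) (leqnSn _).
have sg1' : (size g1' <= m.+1)%N by rewrite /m; apply: leq_trans (leq_maxr _ _) (leqnSn _).
set W := Z1 * hom m g1' Pl Ql - Z2 * hom m g1 Pl Ql.
have W0 : W = 0.
  apply: htr.
    apply: (kpB HS); apply: (kpM HS) => //; apply: (kp_hom HS) => //; exact: kpVK.
  rewrite hornerD hornerN !hornerM !hom_eval ?eQl // !ePl -ey'.
  have e1 : Z1.[x] * g1'.[y] = Z2.[x] * g1.[y].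
    have ez' : Z1.[x] / Z2.[x] = g1.[y] / g1'.[y] by rewrite -/z ez ef1 es1.
    have -> : Z1.[x] = (Z1.[x] / Z2.[x]) * Z2.[x] by rewrite divfK.
    by rewrite ez'; field.
  by rewrite mulrCA e1 mulrCA subrr.
have e2 : Z1.[v i] * g1'.[u] = Z2.[v i] * g1.[u].
  have : W.[v i] = 0 by rewrite W0 horner0.
  rewrite hornerD hornerN !hornerM !hom_eval ?eQl // !ePl -/u.
  move/eqP; rewrite subr_eq0 mulrCA [X in _ == X]mulrCA => /eqP.
  by apply: mulfI; rewrite expf_neq0.
exists (g1.[u] / g1'.[u]); split.
  by apply: (srM HSR) => //; apply: (kp_horner HSR) => //; apply: kpVR.
by apply: (mulIf su0); rewrite -mulrA divfK.
Qed.

Theorem corollary3p3 (K' : fieldType) (K V' : K' -> Prop)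
  (I : Type) (lt : I -> I -> Prop) (v : I -> K') (x : K') :
  is_subfield K -> is_valring V' -> immediate K V' ->
  limit_ordinal lt ->
  (forall i, Vof K V' (v i)) ->
  pseudo_convergent V' lt v -> ~ fundamental K V' lt v ->
  V' x -> pseudo_limit V' lt v x ->
  ~ (exists y, K y /\ pseudo_limit V' lt v y) ->
  generated_by K x ->
  transcendental_over K x ->
  (krull_dim1 (Vof K V') \/ henselian (Vof K V')) ->
  algebraic_seq (Vof K V') V' lt v ->
  ~ filtered_union_loc_poly (Vof K V') V'.
Proof.
move=> HK HR himm HL hv hpc _ hxV hx hnl hgen htr _ [f [hf [i0 hi0]]] hfu.
have HS := subfield_ring HK.
have L := lemL HK HR himm HL hv hpc hxV hx hnl hgen htr hfu.
have kf : kp K f by move=> n; case: (hf n).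
have f0 : f != 0.
  apply/eqP => f0; case: (lo_succ HL i0) => i1 h1.
  by have := hi0 i0 i1 (or_introl erefl) h1; rewrite f0 !horner0; apply: vlt_irr.
have fx : f.[x] != 0 by apply: contra f0 => /eqP h; apply/eqP; apply: htr.
case: (classic (exists j, ole lt i0 j /\ V' (f.[v j] / f.[x]))) => [[j [hj hV]]|hno].
  have [i1 hi1] := L (f.[v j])%:P f (kpC HS (kp_horner HS kf (proj1 (hv j)))) kf fx
    ltac:(by rewrite hornerC).
  have [k [hk1 hk2]] := lo_max HL i1 j.
  have [i hi] := lo_succ HL k.
  have h1 := hi1 i (ole_trans HL hk1 (or_intror hi)).
  rewrite hornerC in h1.
  have h2 := hi0 j i hj (ole_lt_trans HL hk2 hi).
  by case: h2.
have [a [ka [a0 hu]]] := himm.1 _ fx.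
have [i1 hi1] := L f a%:P kf (kpC HS ka) ltac:(by rewrite hornerC) ltac:(by rewrite hornerC; case: hu => _ []).
have [k [hk1 hk2]] := lo_max HL i1 i0.
apply: hno; exists k; split => //.
have [c [hc ec]] := hi1 k hk1; rewrite hornerC in ec.
rewrite ec.
have : V' (f.[x] / a)^-1 by case: hu => _ [].
rewrite invf_div => h.
have -> : a * c / f.[x] = c * (a / f.[x]) by rewrite mulrAC mulrC.
exact: (srM (vr_sr HR)).
Qed.
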